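(* Let $\varepsilon$ be a formal parameter with $\varepsilon^2=0$. For integers $\alpha_0,\beta_0,\gamma_0$, consider the initial triple $(1+\alpha_0\varepsilon,\,1+\beta_0\varepsilon,\,1+\gamma_0\varepsilon)$ of solutions of the Shadow Markoff equation $$A^2+B^2+C^2=(3-\sigma\varepsilon)ABC,\qquad \sigma=\alpha_0+\beta_0+\gamma_0,$$ and all solutions $(a+\alpha\varepsilon,b+\beta\varepsilon,c+\gamma\varepsilon)$ obtained from it by sequences of mutations and permutations along the Markoff tree. There exists a convex polygon $P$ in $\mathbb{QP}^2$ such that every solution obtained from the initial triple $(1+\alpha_0\varepsilon,1+\beta_0\varepsilon,1+\gamma_0\varepsilon)$ is positive (i.e., satisfies $a,b,c,\alpha,\beta,\gamma\in\mathbb{N}$) if and only if the point $(\alpha_0:\beta_0:\gamma_0)$ belongs to $P$.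
   Context: Dual numbers are elements $a+\alpha\varepsilon$ ($a,\alpha\in\mathbb{R}$) of the commutative algebra generated by $\varepsilon$ with $\varepsilon^2=0$. The mutation at $A$ sends $(A,B,C)$ to $(A',B,C)$ with $A'=(B^2+C^2)/A$; explicitly $a'=(b^2+c^2)/a$ and $\alpha'=(-a'\alpha+2b\beta+2c\gamma)/a$. Mutations at $B$ and $C$ are defined symmetrically. Mutations preserve the set of solutions of the Shadow Markoff equation; starting from real parts $(1,1,1)$, the real parts run over the classical Markoff tree of positive integer solutions of $a^2+b^2+c^2=3abc$. Because mutations act linearly on the nilpotent parts, an initial triple is naturally associated with the point $(\alpha_0:\beta_0:\gamma_0)\in\mathbb{QP}^2$. *)

(* Defs.v *)
(* Dual numbers a + alpha*eps are represented as pairs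
   (a, alpha) of rationals; a triple of dual numbers as a triple of pairs. *)
From mathcomp Require Import all_boot all_order all_algebra.
Set Implicit Arguments. Unset Strict Implicit. Unset Printing Implicit Defensive.
Import Order.TTheory GRing.Theory Num.Theory.
Local Open Scope ring_scope.

Definition dual := (rat * rat)%type.
Definition dtriple := (dual * dual * dual)%type.

Definition mut1 (A B C : dual) : dual :=
  let: (a, al) := A in let: (b, be) := B in let: (c, ga) := C in
  let a' := (b ^+ 2 + c ^+ 2) / a in
  (a', (- a' * al + 2 * b * be + 2 * c * ga) / a).

Definition mutA (t : dtriple) : dtriple :=
  let: (A, B, C) := t in (mut1 A B C, B, C).
Definition mutB (t : dtriple) : dtriple :=
  let: (A, B, C) := t in (A, mut1 B A C, C).
Definition mutC (t : dtriple) : dtriple :=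
  let: (A, B, C) := t in (A, B, mut1 C A B).

(* transpositions generating all permutations of the triple *)
Definition swap12 (t : dtriple) : dtriple := let: (A, B, C) := t in (B, A, C).
Definition swap23 (t : dtriple) : dtriple := let: (A, B, C) := t in (A, C, B).

Definition init_triple (a0 b0 c0 : int) : dtriple :=
  ((1, a0%:~R), (1, b0%:~R), (1, c0%:~R)).

Inductive obtained (t0 : dtriple) : dtriple -> Prop :=
  | obt_init : obtained t0 t0
  | obt_mutA t : obtained t0 t -> obtained t0 (mutA t)
  | obt_mutB t : obtained t0 t -> obtained t0 (mutB t)
  | obt_mutC t : obtained t0 t -> obtained t0 (mutC t)
  | obt_swap12 t : obtained t0 t -> obtained t0 (swap12 t)
  | obt_swap23 t : obtained t0 t -> obtained t0 (swap23 t).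

Definition is_nat (q : rat) : Prop := exists n : nat, q = n%:R.

Definition positive_triple (t : dtriple) : Prop :=
  let: ((a, al), (b, be), (c, ga)) := t in
  [/\ is_nat a, is_nat b & is_nat c] /\ [/\ is_nat al, is_nat be & is_nat ga].

Definition pt := (rat * rat * rat)%type.

Definition in_conv_hull (ps : seq pt) (x : pt) : Prop :=
  exists w : nat -> rat,
    [/\ forall i, (i < size ps)%N -> 0 <= w i,
        \sum_(i < size ps) w i = 1,
        x.1.1 = \sum_(i < size ps) w i * (nth x ps i).1.1,
        x.1.2 = \sum_(i < size ps) w i * (nth x ps i).1.2 &
        x.2   = \sum_(i < size ps) w i * (nth x ps i).2].

(* a (possibly degenerate) convex polygon in the affine chart
   {x + y + z = 1} of QP^2: convex hull of a nonempty finite list of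
   points of that plane *)
Definition chart_polygon (ps : seq pt) : Prop :=
  ps != [::] /\ all (fun p : pt => p.1.1 + p.1.2 + p.2 == 1) ps.

(* the projective point (a0 : b0 : c0), represented by its ray, meets P *)
Definition proj_point_in (ps : seq pt) (a0 b0 c0 : int) : Prop :=
  exists lam : rat, 0 < lam /\
    in_conv_hull ps (lam * a0%:~R, lam * b0%:~R, lam * c0%:~R).

(* Main.v *)
Require Import Defs.
From mathcomp Require Import all_boot all_order all_algebra.
From mathcomp Require Import ring lra zify.
Import Order.TTheory GRing.Theory Num.Theory.
Local Open Scope ring_scope.

Lemma obt_trans r s t : obtained r s -> obtained s t -> obtained r t.
Proof.
move=> hrs; elim=> [|t' _ ih|t' _ ih|t' _ ih|t' _ ih|t' _ ih]; first exact: hrs.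
- exact: obt_mutA. - exact: obt_mutB. - exact: obt_mutC.
- exact: obt_swap12. - exact: obt_swap23.
Qed.

Definition Sstep (t : dtriple) : dtriple := swap23 (mutC t).

Definition qstep (d : rat) (s : rat * rat * rat * rat) :=
  let: (u0, u1, v0, v1) := s in (u1, 3 * u1 - u0, v1, 3 * v1 - v0 + d * u1).

Section Branch.
Variables a b c : rat.
Let d := 3 * a - (a + b + c).
Let T0 : dtriple := ((1, a), (1, b), (1, c)).
Let s0 := (1 : rat, 1 : rat, c, b).
Let W0 := b - c.

Definition Inv (n : nat) (s : rat * rat * rat * rat) :=
  let: (u0, u1, v0, v1) := s in
  [/\ iter n Sstep T0 = ((1, a), (u1, v1), (u0, v0)),
      1 + u1 ^+ 2 + u0 ^+ 2 = 3 * u1 * u0,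
      2 * a + 2 * u1 * v1 + 2 * u0 * v0 = 3 * (u0 * v1 + u1 * v0) + d * u0 * u1,
      [/\ 1 <= u0, u0 <= u1, u1 <= 3 * u0 & n%:R <= u1] &
      (d <= 0 -> v1 * u0 - v0 * u1 <= W0 + d * (u0 ^+ 2 - 1))].

Lemma inv_all n : Inv n (iter n (qstep d) s0).
Proof.
elim: n => [|n ih].
  rewrite /= /s0 /Inv /= /d /W0; split;
    [done | rewrite expr1n; lra | lra | split; lra | move=> _; rewrite expr1n; lra].
rewrite iterS; move: ih; case: (iter n (qstep d) s0) => [[[u0 u1] v0] v1].
case=> hT hI hJ [h1 h2 h3 h4] hW.
rewrite /Inv /qstep iterS hT; clear hT.
have u0n : u0 != 0 by apply/eqP => e; rewrite e in h1; lra.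
have e1 : (1 ^+ 2 + u1 ^+ 2) / u0 = 3 * u1 - u0.
  apply: (mulIf u0n); rewrite mulfVK //; nra.
split.
- rewrite /Sstep /mutC /swap23 /mut1 e1; congr (_, _, _); congr (_, _).
  apply: (mulIf u0n); rewrite mulfVK //; nra.
- nra.
- nra.
- split; lra.
- move=> hd.
  have h5 : d * u0 ^+ 2 <= 0 by apply: mulr_le0_ge0 => //; apply: sqr_ge0.
  have := hW hd; nra.
Qed.

Lemma branch_contra (K : nat) :
  d <= -1 -> W0 - d <= K%:R ->
  (forall n, is_nat (iter n Sstep T0).2.2) -> False.
Proof.
move=> hd hK hnat.
pose st n := iter n (qstep d) s0.
pose r n := (st n).1.2 / (st n).1.1.1.
have step : forall n, (6 * K <= n)%N -> r n.+1 <= r n - 1/6.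
  move=> n hn; rewrite /r /st iterS.
  have := inv_all n; case: (iter n (qstep d) s0) => [[[u0 u1] v0] v1].
  case=> _ _ _ [h1 h2 h3 h4] hW /=.
  have hW' := hW ltac:(lra).
  have u0p : 0 < u0 by lra.
  have u1p : 0 < u1 by lra.
  have hn' : 6 * K%:R <= u1 by rewrite (le_trans _ h4) // -natrM ler_nat.
  have hp : 6 * (W0 - d) <= u0 * u1 by nra.
  have e : v1 / u1 = v0 / u0 + (v1 * u0 - v0 * u1) / (u0 * u1).
    field; apply/andP; split; apply/eqP; lra.
  rewrite e lerD2l ler_pdivrMr ?mulr_gt0 //; nra.
have decay : forall m, r (6 * K + m)%N <= r (6 * K)%N - m%:R / 6.
  elim=> [|m ih]; first by rewrite addn0 mul0r subr0.
  rewrite addnS; apply: (le_trans (step _ (leq_addr _ _))).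
  have -> : (m.+1)%:R = m%:R + 1 :> rat by rewrite -addn1 natrD.
  lra.
set M := (6 * K)%N.
have nonneg : forall n, exists k : nat, (st n).1.2 = k%:R /\ 1 <= (st n).1.1.1.
  move=> n; have := inv_all n; have := hnat n; rewrite /st.
  case: (iter n (qstep d) s0) => [[[u0 u1] v0] v1] hn [hT _ _ [h1 _ _ _] _] /=.
  by move: hn; rewrite hT /= => -[k ->]; exists k.
have [k [ek hu]] := nonneg M.
have rM : r M <= k%:R.
  rewrite /r ek ler_pdivrMr; last by lra.
  by rewrite -{1}(mulr1 k%:R) ler_wpM2l.
have := decay (6 * k + 6)%N; rewrite -/M.
have [k' [ek' hu']] := nonneg (M + (6 * k + 6))%N.
have : 0 <= r (M + (6 * k + 6))%N by rewrite /r ek' divr_ge0 //; lra.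
rewrite natrD natrM.
move=> h1 h2; lra.
Qed.
End Branch.

Lemma pos_last (t : dtriple) : positive_triple t -> is_nat t.2.2.
Proof. by case: t => [[[? ?] [? ?]] [? ?]] [_ [_ _ ?]]. Qed.

Lemma obt_iter t0 n : obtained t0 (iter n Sstep t0).
Proof.
elim: n => [|n ih]; first exact: obt_init.
by rewrite iterS; apply: obt_swap23; apply: obt_mutC.
Qed.

Lemma key (x y z : int) :
  (forall t, obtained ((1, x%:~R), (1, y%:~R), (1, z%:~R)) t -> positive_triple t) ->
  (x + y + z <= 3 * x)%R.
Proof.
move=> hpos; rewrite leNgt; apply/negP => hlt.
pose dl := (3 * x - (x + y + z))%R.
have hdl : (dl <= -1)%R by rewrite /dl; lia.
apply: (@branch_contra x%:~R y%:~R z%:~R (absz (y - z - dl)%R)).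
- have -> : (3 * x%:~R - (x%:~R + y%:~R + z%:~R) : rat) = dl%:~R.
    by rewrite /dl !(rmorphB, rmorphD, rmorphM).
  by rewrite -[-1 : rat]/((-1)%:~R) ler_int.
- have -> : (y%:~R - z%:~R - (3 * x%:~R - (x%:~R + y%:~R + z%:~R)) : rat)
      = (y - z - dl)%:~R.
    by rewrite /dl !(rmorphB, rmorphD, rmorphM).
  by rewrite natr_absz ler_int ler_norm.
- by move=> n; apply: pos_last; apply: hpos; apply: obt_iter.
Qed.

Lemma ray_step (k : rat) (x y z : nat) : (0 < x)%N -> (0 < y)%N -> (0 < z)%N ->
  (x ^ 2 + y ^ 2 + z ^ 2 = 3 * x * y * z)%N ->
  exists x' : nat, [/\ (0 < x')%N, (x' ^ 2 + y ^ 2 + z ^ 2 = 3 * x' * y * z)%N &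
    mut1 (x%:R, k * x%:R) (y%:R, k * y%:R) (z%:R, k * z%:R) = (x'%:R, k * x'%:R)].
Proof.
move=> hx hy hz hE.
have hlt : (x < 3 * y * z)%N by nia.
exists (3 * y * z - x)%N; split; [lia | nia |].
have hE' : (x%:R ^+ 2 + y%:R ^+ 2 + z%:R ^+ 2 = 3 * x%:R * y%:R * z%:R :> rat).
  by have := congr1 (GRing.natmul (1 : rat)) hE; rewrite !natrD !natrM !expr2.
have xn : (x%:R : rat) != 0 by rewrite pnatr_eq0 -lt0n.
rewrite (natrB _ (ltnW hlt)) !natrM /mut1.
have e1 : (y%:R ^+ 2 + z%:R ^+ 2) / x%:R = 3%:R * y%:R * z%:R - x%:R :> rat.
  apply: (mulIf xn); rewrite mulfVK //; rewrite -[3%:R]/(3 : rat); nra.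
rewrite e1; congr pair; apply: (mulIf xn); rewrite mulfVK //.
rewrite -[3%:R]/(3 : rat). have h := congr1 (GRing.mul (2 * k)) hE'. rewrite /= in h. nra.
Qed.

Definition Pinv (k : nat) (t : dtriple) := exists x y z : nat,
  [/\ (0 < x)%N, (0 < y)%N, (0 < z)%N, (x ^ 2 + y ^ 2 + z ^ 2 = 3 * x * y * z)%N &
   t = ((x%:R, k%:R * x%:R), (y%:R, k%:R * y%:R), (z%:R, k%:R * z%:R))].

Lemma Pinv_obt (k : nat) t0 t : Pinv k t0 -> obtained t0 t -> Pinv k t.
Proof.
move=> h0; elim => // {}t _ [x [y [z [hx hy hz hE ->]]]].
- rewrite /mutA; have [x' [hx' hE' ->]] := ray_step k%:R _ _ _ hx hy hz hE.
  by exists x', y, z; split; [exact: hx'|exact: hy|exact: hz|exact: hE'|].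
- rewrite /mutB; have hE1 : (y ^ 2 + x ^ 2 + z ^ 2 = 3 * y * x * z)%N by lia.
  have [y' [hy' hE' ->]] := ray_step k%:R _ _ _ hy hx hz hE1.
  have hE2 : (x ^ 2 + y' ^ 2 + z ^ 2 = 3 * x * y' * z)%N by lia.
  by exists x, y', z; split; [exact: hx|exact: hy'|exact: hz|exact: hE2|].
- rewrite /mutC; have hE1 : (z ^ 2 + x ^ 2 + y ^ 2 = 3 * z * x * y)%N by lia.
  have [z' [hz' hE' ->]] := ray_step k%:R _ _ _ hz hx hy hE1.
  have hE2 : (x ^ 2 + y ^ 2 + z' ^ 2 = 3 * x * y * z')%N by lia.
  by exists x, y, z'; split; [exact: hx|exact: hy|exact: hz'|exact: hE2|].
- have hE2 : (y ^ 2 + x ^ 2 + z ^ 2 = 3 * y * x * z)%N by lia.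
  by exists y, x, z; split; [exact: hy|exact: hx|exact: hz|exact: hE2|].
- have hE2 : (x ^ 2 + z ^ 2 + y ^ 2 = 3 * x * z * y)%N by lia.
  by exists x, z, y; split; [exact: hx|exact: hz|exact: hy|exact: hE2|].
Qed.

Lemma Pinv_pos k t : Pinv k t -> positive_triple t.
Proof.
move=> [x [y [z [_ _ _ _ ->]]]].
by split; split; [exists x | exists y | exists z | exists (k * x)%N | exists (k * y)%N | exists (k * z)%N];
  rewrite // natrM.
Qed.

Theorem theorem3 :
  exists ps : seq pt, chart_polygon ps /\
    forall a0 b0 c0 : int, ~ (a0 = 0 /\ b0 = 0 /\ c0 = 0) ->
      ((forall t, obtained (init_triple a0 b0 c0) t -> positive_triple t)
       <-> proj_point_in ps a0 b0 c0).
Proof.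
exists [:: (1/3, 1/3, 1/3)]; split.
  split; first exact: (erefl true).
  rewrite /all andbT; change (1/3 + 1/3 + 1/3 == 1 :> rat); apply/eqP; lra.
move=> x y z hnz; split.
- move=> hpos.
  have hx := key _ _ _ hpos.
  have hy : (y + x + z <= 3 * y)%R.
    apply: key => t ht; apply: hpos; apply: obt_trans ht.
    exact: (obt_swap12 (obt_init _)).
  have hz : (z + x + y <= 3 * z)%R.
    apply: key => t ht; apply: hpos; apply: obt_trans ht.
    exact: (obt_swap12 (obt_swap23 (obt_init _))).
  have [_ [[n hn] _ _]] := hpos _ (obt_init _).
  have x0 : (0 <= x)%R.
    by rewrite -(ler_int rat) hn mulr0z ler0n.
  have exy : x = y by lia.
  have exz : x = z by lia.
  subst y z.
  have xp : (0 < x)%R by rewrite lt_def x0 andbT; apply/eqP => e; apply: hnz.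
  have xr : (0 < x%:~R :> rat) by rewrite ltr0z.
  exists (1 / (3 * x%:~R)); split; first by rewrite divr_gt0 // mulr_gt0.
  have x3 : (3 * x%:~R : rat) != 0 by apply/eqP; lra.
  exists (fun _ => 1); split.
  + by move=> *; exact: ler01.
  + by rewrite big_ord1.
  + by rewrite big_ord1 /=; field; rewrite lt0r_neq0.
  + by rewrite big_ord1 /=; field; rewrite lt0r_neq0.
  + by rewrite big_ord1 /=; field; rewrite lt0r_neq0.
- move=> [lam [hl [w [hw hs h1 h2 h3]]]].
  rewrite big_ord1 in hs.
  rewrite big_ord1 hs mul1r /= in h1.
  rewrite big_ord1 hs mul1r /= in h2.
  rewrite big_ord1 hs mul1r /= in h3.
  have exy : x%:~R = y%:~R :> rat.
    by apply: (mulfI (lt0r_neq0 hl)); rewrite h1 h2.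
  have exz : x%:~R = z%:~R :> rat.
    by apply: (mulfI (lt0r_neq0 hl)); rewrite h1 h3.
  have xr : (0 < x%:~R :> rat).
    have : 0 < lam * x%:~R :> rat by rewrite h1.
    by rewrite pmulr_rgt0.
  have x0 : (0 <= x)%R by rewrite -(ler_int rat) mulr0z ltW.
  move/eqP: exy; rewrite eqr_int => /eqP <-.
  move/eqP: exz; rewrite eqr_int => /eqP <-.
  have hk : x%:~R = (absz x)%:R :> rat by rewrite natr_absz ger0_norm.
  move=> t ht; apply: (@Pinv_pos (absz x)); apply: Pinv_obt ht.
  exists 1%N, 1%N, 1%N; split => //.
  by rewrite /init_triple hk mulr1.
Qed.
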